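(* Every ternary cubic form whose zero locus in $\mathbb{P}^2$ is a cuspidal cubic curve has an apolar star configuration $\mathbb{X}(4)$.
   Context: Let $S=\mathbb{C}[x_0,x_1,x_2]$ and $T=\mathbb{C}[y_0,y_1,y_2]$, where $T$ acts on $S$ by differentiation, $y_j=\partial/\partial x_j$. For a form $F\in S$, $F^\perp=\{\partial\in T:\partial F=0\}$. A finite set of points $\mathbb{X}\subset\mathbb{P}^2=\mathbb{P}(S_1)$ with defining ideal $I(\mathbb{X})\subseteq T$ is apolar to $F$ if $I(\mathbb{X})\subseteq F^\perp$. A star configuration $\mathbb{X}(4)\subset\mathbb{P}^2$: take $4$ linear forms $l_1,\dots,l_4\in T_1$ such that any $3$ of them are linearly independent; $\mathbb{X}(4)$ is the set of $6$ pairwise intersection points of the lines $\{l_i=0\}$. *)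

(* Defs.v *)
From HB Require Import structures.
From mathcomp Require Import all_boot all_order all_algebra.
From mathcomp Require Import reals.
From mathcomp Require Import complex.
From mathcomp Require Import mpoly.
Set Implicit Arguments. Unset Strict Implicit. Unset Printing Implicit Defensive.
Import Order.TTheory GRing.Theory Num.Theory.
Local Open Scope ring_scope.

Notation CC R := (complex R).

Section Defs.
Variable C : fieldType.

(* Action of T on S by differentiation: g(d/dx) F, where the monomial
   y^m acts as the iterated partial derivative d^m/dx^m. *)
Definition apolar_act (g F : {mpoly C[3]}) : {mpoly C[3]} :=
  \sum_(m <- msupp g) g@_m *: F^`M[m].

Definition linform (a : 'rV[C]_3) : {mpoly C[3]} := \sum_(k < 3) a 0 k *: 'X_k.

(* Irreducibility of a polynomial: non-constant, and any factorization has a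
   constant factor (msize p <= 1 means p is constant). *)
Definition mirreducible (F : {mpoly C[3]}) : Prop :=
  (1 < msize F)%N /\
  forall G H : {mpoly C[3]}, F = G * H -> (msize G <= 1)%N \/ (msize H <= 1)%N.

(* v (a nonzero vector, i.e. a point of P^2) is a singular point of V(F). *)
Definition singular_point (F : {mpoly C[3]}) (v : 'I_3 -> C) : Prop :=
  (exists k, v k != 0) /\ F.@[v] = 0 /\ forall i : 'I_3, (F^`M(i)).@[v] = 0.

Definition hessian (F : {mpoly C[3]}) (v : 'I_3 -> C) : 'M[C]_3 :=
  \matrix_(i < 3, j < 3) ((F^`M(i))^`M(j)).@[v].

(* A cusp: a double point whose tangent cone (the quadric given by the
   Hessian at the point) is a single line counted twice, i.e. the Hessian
   quadratic form has rank 1. *)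
Definition cusp (F : {mpoly C[3]}) (v : 'I_3 -> C) : Prop :=
  singular_point F v /\ \rank (hessian F v) = 1%N.

Definition cuspidal_cubic (F : {mpoly C[3]}) : Prop :=
  F \is 3.-homog /\ mirreducible F /\ exists v, cusp F v.

Definition star_lines (L : 'M[C]_(4, 3)) : Prop :=
  forall i j k : 'I_4, i != j -> j != k -> i != k ->
    free [:: row i L; row j L; row k L].

(* v lies on (the affine cone over) the star configuration X(4): it is in
   the intersection of two distinct lines l_i = l_j = 0. *)
Definition star_point (L : 'M[C]_(4, 3)) (v : 'I_3 -> C) : Prop :=
  exists i j : 'I_4, i != j /\
    (linform (row i L)).@[v] = 0 /\ (linform (row j L)).@[v] = 0.

Definition in_star_ideal (L : 'M[C]_(4, 3)) (g : {mpoly C[3]}) : Prop :=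
  forall v, star_point L v -> g.@[v] = 0.

Definition in_perp (F g : {mpoly C[3]}) : Prop := apolar_act g F = 0.

Definition apolar_star (F : {mpoly C[3]}) (L : 'M[C]_(4, 3)) : Prop :=
  star_lines L /\ forall g, in_star_ideal L g -> in_perp F g.

End Defs.

(* Main.v *)
Require Import Defs.
From HB Require Import structures.
From mathcomp Require Import all_boot all_order all_algebra.
From mathcomp Require Import reals complex mpoly.
From mathcomp Require Import ring.
Set Implicit Arguments. Unset Strict Implicit. Unset Printing Implicit Defensive.
Import Order.TTheory GRing.Theory Num.Theory.
Local Open Scope ring_scope.


Section Cubic.
Variable C : numFieldType.
Notation P := {mpoly C[3]}.
Definition i0 : 'I_3 := @Ordinal 3 0 isT.
Definition i1 : 'I_3 := @Ordinal 3 1 isT.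
Definition i2 : 'I_3 := @Ordinal 3 2 isT.

Lemma ord3P (k : 'I_3) : k = i0 \/ k = i1 \/ k = i2.
Proof.
case: k => [[|[|[|k]]] Hk].
- by left; apply/val_inj.
- by right; left; apply/val_inj.
- by right; right; apply/val_inj.
- by [].
Qed.

Definition X0 : P := 'X_i0.
Definition X1 : P := 'X_i1.
Definition X2 : P := 'X_i2.

Definition cubp (c : nat -> nat -> nat -> C) : P :=
  c 3 0 0 *: (X0 * X0 * X0) + c 0 3 0 *: (X1 * X1 * X1) + c 0 0 3 *: (X2 * X2 * X2)
+ c 2 1 0 *: (X0 * X0 * X1) + c 2 0 1 *: (X0 * X0 * X2) + c 1 2 0 *: (X0 * X1 * X1)
+ c 0 2 1 *: (X1 * X1 * X2) + c 1 0 2 *: (X0 * X2 * X2) + c 0 1 2 *: (X1 * X2 * X2)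
+ c 1 1 1 *: (X0 * X1 * X2).

Definition ceval (c : nat -> nat -> nat -> C) (x : 'I_3 -> C) : C :=
  let x0 := x i0 in let x1 := x i1 in let x2 := x i2 in
  c 3 0 0 * (x0 * x0 * x0) + c 0 3 0 * (x1 * x1 * x1) + c 0 0 3 * (x2 * x2 * x2)
+ c 2 1 0 * (x0 * x0 * x1) + c 2 0 1 * (x0 * x0 * x2) + c 1 2 0 * (x0 * x1 * x1)
+ c 0 2 1 * (x1 * x1 * x2) + c 1 0 2 * (x0 * x2 * x2) + c 0 1 2 * (x1 * x2 * x2)
+ c 1 1 1 * (x0 * x1 * x2).

Lemma cubp_eval c x : (cubp c).@[x] = ceval c x.
Proof.
by rewrite /cubp /ceval !(mevalD, mevalZ, mevalM) /X0 /X1 /X2 !mevalXU.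
Qed.

(* T6 : six times the symmetric trilinear form *)
Definition T6 (c : nat -> nat -> nat -> C) (x y z : 'I_3 -> C) : C :=
  let x0 := x i0 in let x1 := x i1 in let x2 := x i2 in
  let y0 := y i0 in let y1 := y i1 in let y2 := y i2 in
  let z0 := z i0 in let z1 := z i1 in let z2 := z i2 in
  6%:R * (c 3 0 0 * (x0*y0*z0) + c 0 3 0 * (x1*y1*z1) + c 0 0 3 * (x2*y2*z2))
+ 2%:R * (c 2 1 0 * (x0*y0*z1 + x0*y1*z0 + x1*y0*z0)
        + c 2 0 1 * (x0*y0*z2 + x0*y2*z0 + x2*y0*z0)
        + c 1 2 0 * (x0*y1*z1 + x1*y0*z1 + x1*y1*z0)
        + c 0 2 1 * (x1*y1*z2 + x1*y2*z1 + x2*y1*z1)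
        + c 1 0 2 * (x0*y2*z2 + x2*y0*z2 + x2*y2*z0)
        + c 0 1 2 * (x1*y2*z2 + x2*y1*z2 + x2*y2*z1))
+ c 1 1 1 * (x0*y1*z2 + x0*y2*z1 + x1*y0*z2 + x1*y2*z0 + x2*y0*z1 + x2*y1*z0).

Definition ev (i : 'I_3) : 'I_3 -> C := fun k => (k == i)%:R.

Lemma mderivXi (i j : 'I_3) : ('X_j : P)^`M(i) = (i == j)%:R%:MP.
Proof.
rewrite mderivX mnm1E eq_sym.
case: eqP => [->|_]; last by rewrite scale0r.
rewrite (_ : (_ - _)%MM = 0%MM); last by apply/mnmP => k; rewrite mnmBE mnm0E subnn.
by rewrite mpolyX0 scale1r.
Qed.

Definition mk (a b c : nat) : 'X_{1..3} := [multinom [tuple a; b; c]].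

Lemma mkE a b c (k : 'I_3) : mk a b c k = if k == i0 then a else if k == i1 then b else c.
Proof. by rewrite mnm_tnth; case: (ord3P k) => [->|[->|->]]. Qed.

Lemma mnm3_eq (m1 m2 : 'X_{1..3}) :
  (m1 == m2) = [&& m1 i0 == m2 i0, m1 i1 == m2 i1 & m1 i2 == m2 i2].
Proof.
apply/eqP/and3P => [->|[/eqP h0 /eqP h1 /eqP h2]]; first by rewrite !eqxx.
by apply/mnmP => k; case: (ord3P k) => [->|[->|->]].
Qed.

Lemma mdeg3 (m : 'X_{1..3}) : mdeg m = (m i0 + m i1 + m i2)%N.
Proof.
rewrite mdegE !big_ord_recl big_ord0 addn0 addnA.
by congr (_ + _ + _)%N; congr (m _); apply/val_inj.
Qed.

Lemma mnm_mk (m : 'X_{1..3}) : m = mk (m i0) (m i1) (m i2).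
Proof. by apply/mnmP => k; rewrite mkE; case: (ord3P k) => [->|[->|->]]. Qed.

Lemma X3E (i j k : 'I_3) : ('X_i * 'X_j * 'X_k : P) = 'X_[U_(i) + U_(j) + U_(k)].
Proof. by rewrite !mpolyXD. Qed.

Lemma cubp_coef c m : (cubp c)@_m =
  c 3 0 0 * ((U_(i0) + U_(i0) + U_(i0))%MM == m)%:R
+ c 0 3 0 * ((U_(i1) + U_(i1) + U_(i1))%MM == m)%:R
+ c 0 0 3 * ((U_(i2) + U_(i2) + U_(i2))%MM == m)%:R
+ c 2 1 0 * ((U_(i0) + U_(i0) + U_(i1))%MM == m)%:R
+ c 2 0 1 * ((U_(i0) + U_(i0) + U_(i2))%MM == m)%:R
+ c 1 2 0 * ((U_(i0) + U_(i1) + U_(i1))%MM == m)%:R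
+ c 0 2 1 * ((U_(i1) + U_(i1) + U_(i2))%MM == m)%:R
+ c 1 0 2 * ((U_(i0) + U_(i2) + U_(i2))%MM == m)%:R
+ c 0 1 2 * ((U_(i1) + U_(i2) + U_(i2))%MM == m)%:R
+ c 1 1 1 * ((U_(i0) + U_(i1) + U_(i2))%MM == m)%:R.
Proof. by rewrite /cubp /X0 /X1 /X2 !X3E !(mcoeffD, mcoeffZ, mcoeffX). Qed.

Lemma U3_neq (i j k : 'I_3) (m : 'X_{1..3}) : mdeg m != 3%N ->
  ((U_(i) + U_(j) + U_(k))%MM == m) = false.
Proof.
move=> hm; apply/negbTE; apply: contra hm => /eqP <-.
by rewrite !mdegD !mdeg1.
Qed.

Lemma cubE (F : P) : F \is 3.-homog ->
  F = cubp (fun a b c => F@_(mk a b c)).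
Proof.
move=> hF; apply/mpolyP => m; rewrite cubp_coef.
have [h3|h3] := eqVneq (mdeg m) 3%N; last first.
  by rewrite !U3_neq // (dhomog_nemf_coeff hF h3) /=; ring.
rewrite [in LHS](mnm_mk m) !mnm3_eq !mnmDE !mnm1E /=.
move: h3; rewrite mdeg3.
case: (m i0) => [|[|[|[|a]]]]; case: (m i1) => [|[|[|[|b]]]];
  case: (m i2) => [|[|[|[|cc]]]] //= _; try ring.
Qed.

Definition pt (a b c : C) : 'I_3 -> C :=
  fun k => match nat_of_ord k with 0 => a | 1 => b | _ => c end.

Lemma pt0 a b c : pt a b c i0 = a. Proof. by []. Qed.
Lemma pt1 a b c : pt a b c i1 = b. Proof. by []. Qed.
Lemma pt2 a b c : pt a b c i2 = c. Proof. by []. Qed.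
Definition ptE := (pt0, pt1, pt2).

Lemma cubp_ext c d : (forall x, ceval c x = ceval d x) -> cubp c = cubp d.
Proof.
move=> H.
have E : forall x y z, ceval c (pt x y z) - ceval d (pt x y z) = 0.
  by move=> x y z; rewrite H subrr.
have Z : forall u w : C, u - w = 0 -> u = w by move=> u w /eqP; rewrite subr_eq0 => /eqP.
have e300 : c 3 0 0 = d 3 0 0.
  apply: Z; rewrite -(E 1 0 0) /ceval /= !ptE; ring.
have e030 : c 0 3 0 = d 0 3 0.
  apply: Z; rewrite -(E 0 1 0) /ceval /= !ptE; ring.
have e003 : c 0 0 3 = d 0 0 3.
  apply: Z; rewrite -(E 0 0 1) /ceval /= !ptE; ring.
have e210 : c 2 1 0 = d 2 1 0.
  apply: Z; rewrite (_ : _ - _ = (ceval c (pt 1 1 0) - ceval d (pt 1 1 0)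
     - (ceval c (pt 1 (-1) 0) - ceval d (pt 1 (-1) 0)))/2%:R
     - (ceval c (pt 0 1 0) - ceval d (pt 0 1 0))); last by rewrite /ceval /= !ptE; field.
  by rewrite !E; ring.
have e120 : c 1 2 0 = d 1 2 0.
  apply: Z; rewrite (_ : _ - _ = (ceval c (pt 1 1 0) - ceval d (pt 1 1 0)
     + (ceval c (pt 1 (-1) 0) - ceval d (pt 1 (-1) 0)))/2%:R
     - (ceval c (pt 1 0 0) - ceval d (pt 1 0 0))); last by rewrite /ceval /= !ptE; field.
  by rewrite !E; ring.
have e201 : c 2 0 1 = d 2 0 1.
  apply: Z; rewrite (_ : _ - _ = (ceval c (pt 1 0 1) - ceval d (pt 1 0 1)
     - (ceval c (pt 1 0 (-1)) - ceval d (pt 1 0 (-1))))/2%:R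
     - (ceval c (pt 0 0 1) - ceval d (pt 0 0 1))); last by rewrite /ceval /= !ptE; field.
  by rewrite !E; ring.
have e102 : c 1 0 2 = d 1 0 2.
  apply: Z; rewrite (_ : _ - _ = (ceval c (pt 1 0 1) - ceval d (pt 1 0 1)
     + (ceval c (pt 1 0 (-1)) - ceval d (pt 1 0 (-1))))/2%:R
     - (ceval c (pt 1 0 0) - ceval d (pt 1 0 0))); last by rewrite /ceval /= !ptE; field.
  by rewrite !E; ring.
have e021 : c 0 2 1 = d 0 2 1.
  apply: Z; rewrite (_ : _ - _ = (ceval c (pt 0 1 1) - ceval d (pt 0 1 1)
     - (ceval c (pt 0 1 (-1)) - ceval d (pt 0 1 (-1))))/2%:R
     - (ceval c (pt 0 0 1) - ceval d (pt 0 0 1))); last by rewrite /ceval /= !ptE; field.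
  by rewrite !E; ring.
have e012 : c 0 1 2 = d 0 1 2.
  apply: Z; rewrite (_ : _ - _ = (ceval c (pt 0 1 1) - ceval d (pt 0 1 1)
     + (ceval c (pt 0 1 (-1)) - ceval d (pt 0 1 (-1))))/2%:R
     - (ceval c (pt 0 1 0) - ceval d (pt 0 1 0))); last by rewrite /ceval /= !ptE; field.
  by rewrite !E; ring.
have e111 : c 1 1 1 = d 1 1 1.
  apply: Z; rewrite -(E 1 1 1) /ceval /= !ptE e300 e030 e003 e210 e120 e201 e102 e021 e012; ring.
by rewrite /cubp e300 e030 e003 e210 e120 e201 e102 e021 e012 e111.
Qed.

Lemma homog3_ext (F G : P) : F \is 3.-homog -> G \is 3.-homog ->
  (forall x, F.@[x] = G.@[x]) -> F = G.
Proof.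
move=> hF hG H; rewrite (cubE hF) (cubE hG); apply: cubp_ext => x.
by rewrite -!cubp_eval -(cubE hF) -(cubE hG).
Qed.

Definition dot (p x : 'I_3 -> C) : C := p i0 * x i0 + p i1 * x i1 + p i2 * x i2.
Definition lin (p : 'I_3 -> C) : P := p i0 *: X0 + p i1 *: X1 + p i2 *: X2.

Lemma lin_eval p x : (lin p).@[x] = dot p x.
Proof. by rewrite /lin !(mevalD, mevalZ) /X0 /X1 /X2 !mevalXU. Qed.

Lemma X_homog (i : 'I_3) : ('X_i : P) \is 1.-homog.
Proof. by rewrite dhomogX; apply/eqP; apply: mdeg1. Qed.

Lemma lin_homog p : lin p \is 1.-homog.
Proof. by rewrite /lin !(dhomogD, dhomogZ) // X_homog. Qed.
End Cubic.


Section Apolar.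
Variable C : numFieldType.
Notation P := {mpoly C[3]}.

Lemma dlin (p : 'I_3 -> C) (i : 'I_3) : (lin p)^`M(i) = (p i)%:MP.
Proof.
rewrite /lin /X0 /X1 /X2 !(mderivD, mderivZ, mderivXi).
rewrite -!mul_mpolyC.
case: (ord3P i) => [->|[->|->]] /=; ring.
Qed.

Lemma dlinX (p : 'I_3 -> C) (n : nat) (i : 'I_3) :
  (lin p ^+ n)^`M(i) = (n%:R * p i) *: lin p ^+ n.-1.
Proof.
elim: n => [|n IH].
  by rewrite expr0 -mpolyC1 mderivC mul0r scale0r.
rewrite exprS mderivM IH dlin /=.
case: n IH => [|n] IH.
  by rewrite !expr0 mul0r scale0r mulr0 addr0 -mul_mpolyC; ring.
rewrite -!mul_mpolyC /= exprS; ring.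
Qed.

Definition pm (p : 'I_3 -> C) (m : 'X_{1..3}) : C := \prod_(i < 3) p i ^+ m i.

Lemma prod3 (f : 'I_3 -> C) : \prod_(i < 3) f i = f i0 * f i1 * f i2.
Proof.
rewrite !big_ord_recl big_ord0 mulr1 mulrA.
by congr (_ * _ * _); congr f; apply/val_inj.
Qed.

Lemma dlinm (p : 'I_3 -> C) (k : nat) (m : 'X_{1..3}) :
  (lin p ^+ k)^`M[m] = ((k ^_ mdeg m)%:R * pm p m) *: lin p ^+ (k - mdeg m).
Proof.
move: {2}(mdeg m) (erefl (mdeg m)) => d; elim: d m => [|d IH] m hm.
  have m0 : m = 0%MM by apply/eqP; rewrite -mdeg_eq0 hm.
  subst m; rewrite mderivm0m /pm mdeg0 ffactn0 subn0.
  by rewrite big1 ?mulr1 ?scale1r // => i _; rewrite mnm0E expr0.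
have [i hi] : exists i : 'I_3, (0 < m i)%N.
  move: hm; rewrite mdeg3.
  case h0: (m i0) => [|a]; last by move=> _; exists i0; rewrite h0.
  case h1: (m i1) => [|b]; last by move=> _; exists i1; rewrite h1.
  case h2: (m i2) => [|c]; last by move=> _; exists i2; rewrite h2.
  by [].
set m' := (m - U_(i))%MM.
have em : m = (m' + U_(i))%MM.
  apply/mnmP => j; rewrite mnmDE mnmBE mnm1E.
  case: (eqVneq i j) => [<-|_] /=; first by rewrite addn1 subn1 prednK.
  by rewrite subn0 addn0.
have hm' : mdeg m' = d by move: hm; rewrite em mdegD mdeg1 addn1 => -[].
rewrite em mderivmDm mderivmU1m IH // mderivZ dlinX scalerA mdegD mdeg1 hm' addn1.
congr (_ *: _); last by rewrite subnS.
rewrite ffactnSr natrM /pm.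
have -> : \prod_(j < 3) p j ^+ (m' + U_(i))%MM j = (\prod_(j < 3) p j ^+ m' j) * p i.
  rewrite (eq_bigr (fun j => p j ^+ m' j * p j ^+ (i == j))); last first.
    by move=> j _; rewrite mnmDE mnm1E exprD.
  rewrite big_split /=; congr (_ * _); rewrite (bigD1 i) //= eqxx expr1 big1 ?mulr1 //.
  by move=> j /negbTE; rewrite eq_sym => ->; rewrite expr0.
ring.
Qed.

Lemma apolarD (g F1 F2 : P) : apolar_act g (F1 + F2) = apolar_act g F1 + apolar_act g F2.
Proof. by rewrite /apolar_act -big_split /=; apply: eq_bigr => m _; rewrite mderivmD scalerDr. Qed.

Lemma apolarZ (g F : P) (a : C) : apolar_act g (a *: F) = a *: apolar_act g F.
Proof.
rewrite /apolar_act scaler_sumr; apply: eq_bigr => m _.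
by rewrite mderivmZ !scalerA mulrC.
Qed.

Lemma apolar_pow3 (g : P) (p : 'I_3 -> C) :
  (forall t : C, g.@[fun i => t * p i] = 0) -> apolar_act g (lin p ^+ 3) = 0.
Proof.
move=> Hg.
pose q : {poly C} := \sum_(m <- msupp g) (g@_m * pm p m) *: 'X^(mdeg m).
have qt : forall t, q.[t] = g.@[fun i => t * p i].
  move=> t; rewrite horner_sum mevalE; apply: eq_bigr => m _.
  rewrite hornerZ hornerXn /pm !prod3 mdeg3 !exprD !exprMn; ring.
have q0 : q = 0.
  apply: (@roots_geq_poly_eq0 _ q [seq i%:R | i <- iota 0 (size q)]).
  - by apply/allP => x /mapP [i _ ->]; rewrite /root qt Hg.
  - rewrite map_inj_uniq ?iota_uniq // => a b /eqP; rewrite eqr_nat => /eqP //.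
  - by rewrite size_map size_iota.
have qc : forall d, \sum_(m <- msupp g) (g@_m * pm p m) * (mdeg m == d)%:R = 0.
  move=> d; have := congr1 (fun r : {poly C} => r`_d) q0.
  rewrite /= coef0 /q coef_sum => E; rewrite -[RHS]E.
  by apply: eq_bigr => m _; rewrite coefZ coefXn eq_sym.
pose h (d : nat) : P := (3 ^_ d)%:R *: lin p ^+ (3 - d).
have hE : forall e, h e = (e == 0)%:R *: h 0 + (e == 1)%:R *: h 1
   + (e == 2)%:R *: h 2 + (e == 3)%:R *: h 3.
  move=> e.
  case: e => [|[|[|[|e]]]] /=; rewrite ?scale0r ?scale1r ?addr0 ?add0r //.
  by rewrite /h ffact_small // scale0r.
rewrite /apolar_act.
apply: etrans (_ : _ = \sum_(m <- msupp g) (g@_m * pm p m) *: h (mdeg m)) _.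
  apply: eq_bigr => m _; rewrite dlinm /h !scalerA; congr (_ *: _); ring.
apply: etrans (_ : _ = \sum_(m <- msupp g) (((g@_m * pm p m) * (mdeg m == 0)%:R) *: h 0
   + ((g@_m * pm p m) * (mdeg m == 1)%:R) *: h 1
   + ((g@_m * pm p m) * (mdeg m == 2)%:R) *: h 2
   + ((g@_m * pm p m) * (mdeg m == 3)%:R) *: h 3)) _.
  by apply: eq_bigr => m _; rewrite hE !scalerDr !scalerA.
by rewrite !big_split /= -!scaler_suml !qc !scale0r !addr0.
Qed.
End Apolar.


Section Final.
Variable C : numFieldType.
Notation P := {mpoly C[3]}.

Lemma sum3 (f : 'I_3 -> C) : \sum_(i < 3) f i = f i0 + f i1 + f i2.
Proof.
rewrite !big_ord_recl big_ord0 addr0 addrA.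
by congr (_ + _ + _); congr f; apply/val_inj.
Qed.

Lemma linform_eval (r : 'rV[C]_3) x : (linform r).@[x] = dot (fun k => r 0 k) x.
Proof.
rewrite /linform raddf_sum /=.
rewrite (eq_bigr (fun k => r 0 k * x k)); last by move=> k _; rewrite mevalZ mevalXU.
by rewrite sum3.
Qed.

Lemma free_swap12 (V : vectType C) (a b c : V) : free [:: a; b; c] = free [:: b; a; c].
Proof.
apply: perm_free.
by have := perm_catCA [:: a] [:: b] [:: c] [:: b; a; c]; rewrite /= perm_refl.
Qed.

Lemma free_swap23 (V : vectType C) (a b c : V) : free [:: a; b; c] = free [:: a; c; b].
Proof.
apply: perm_free; rewrite perm_cons.
by have := perm_catCA [:: b] [:: c] [::] [:: c; b]; rewrite /= perm_refl.
Qed.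

Definition j0 : 'I_4 := @Ordinal 4 0 isT.
Definition j1 : 'I_4 := @Ordinal 4 1 isT.
Definition j2 : 'I_4 := @Ordinal 4 2 isT.
Definition j3 : 'I_4 := @Ordinal 4 3 isT.

Lemma ord4P (k : 'I_4) : k = j0 \/ k = j1 \/ k = j2 \/ k = j3.
Proof.
case: k => [[|[|[|[|k]]]] Hk].
- by left; apply/val_inj.
- by right; left; apply/val_inj.
- by right; right; left; apply/val_inj.
- by right; right; right; apply/val_inj.
- by [].
Qed.


Lemma dotC (p x : 'I_3 -> C) : dot p x = dot x p.
Proof. by rewrite /dot; ring. Qed.

Lemma lin_add (u w : 'I_3 -> C) : lin (fun k => u k + w k) = lin u + lin w.
Proof. by rewrite /lin -!mul_mpolyC; ring. Qed.

Lemma lin_sub (u w : 'I_3 -> C) : lin (fun k => u k - w k) = lin u - lin w.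
Proof. by rewrite /lin -!mul_mpolyC; ring. Qed.

Lemma apolarB (g F1 F2 : P) : apolar_act g (F1 - F2) = apolar_act g F1 - apolar_act g F2.
Proof. by rewrite -scaleN1r apolarD apolarZ scaleN1r. Qed.

Section Fin.
Variables (Pv lv mv b0 b1 b2 : 'I_3 -> C) (k0 : C) (F : P).
Hypotheses (dPb0 : dot Pv b0 = 1) (dPb1 : dot Pv b1 = 0) (dPb2 : dot Pv b2 = 0)
  (dlb0 : dot lv b0 = 0) (dlb1 : dot lv b1 = 1) (dlb2 : dot lv b2 = 0)
  (dmb0 : dot mv b0 = 0) (dmb1 : dot mv b1 = 0) (dmb2 : dot mv b2 = 1).
Hypothesis HF : F = k0 *: lin Pv ^+ 3 + lin lv ^+ 2 * lin mv.

Definition rowf (i : 'I_4) : 'I_3 -> C :=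
  match nat_of_ord i with
  | 0 => b0 | 1 => b1 | 2 => fun k => b1 k - b2 k | _ => fun k => b0 k + b1 k + b2 k end.

Definition Lm : 'M[C]_(4, 3) := \matrix_(i < 4, k < 3) rowf i k.

Lemma Lm_eval i x : (linform (row i Lm)).@[x] = dot (rowf i) x.
Proof. by rewrite linform_eval /dot !mxE. Qed.

Lemma dot_r0 x : dot (rowf j0) x = dot x b0. Proof. by rewrite dotC. Qed.
Lemma dot_r1 x : dot (rowf j1) x = dot x b1. Proof. by rewrite dotC. Qed.
Lemma dot_r2 x : dot (rowf j2) x = dot x b1 - dot x b2. Proof. by rewrite /dot /rowf /=; ring. Qed.
Lemma dot_r3 x : dot (rowf j3) x = dot x b0 + dot x b1 + dot x b2.
Proof. by rewrite /dot /rowf /=; ring. Qed.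

Lemma dot_addl (u w x : 'I_3 -> C) : dot (fun k => u k + w k) x = dot u x + dot w x.
Proof. by rewrite /dot; ring. Qed.
Lemma dot_subl (u w x : 'I_3 -> C) : dot (fun k => u k - w k) x = dot u x - dot w x.
Proof. by rewrite /dot; ring. Qed.

Lemma star_t (p : 'I_3 -> C) (i j : 'I_4) : i != j -> dot (rowf i) p = 0 ->
  dot (rowf j) p = 0 -> forall t, star_point Lm (fun k => t * p k).
Proof.
move=> hij hi hj t; exists i, j; split=> //.
have e : forall r, dot r (fun k => t * p k) = t * dot r p by move=> r; rewrite /dot; ring.
by rewrite !Lm_eval !e hi hj mulr0.
Qed.

Lemma Lm_apolar g : in_star_ideal Lm g -> in_perp F g.
Proof.
move=> Hg; rewrite /in_perp HF apolarD apolarZ.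
have hP : apolar_act g (lin Pv ^+ 3) = 0.
  apply: apolar_pow3 => t; apply: Hg; apply: (@star_t _ j1 j2) => //.
    by rewrite dot_r1 dPb1.
  by rewrite dot_r2 dPb1 dPb2 subrr.
have hm : apolar_act g (lin mv ^+ 3) = 0.
  apply: apolar_pow3 => t; apply: Hg; apply: (@star_t _ j0 j1) => //.
    by rewrite dot_r0 dmb0.
  by rewrite dot_r1 dmb1.
have hlpm : apolar_act g (lin (fun k => lv k + mv k) ^+ 3) = 0.
  apply: apolar_pow3 => t; apply: Hg; apply: (@star_t _ j0 j2) => //.
    by rewrite dot_r0 dot_addl dlb0 dmb0 addr0.
  by rewrite dot_r2 !dot_addl dlb1 dmb1 dlb2 dmb2 addr0 add0r subrr.
have hlmm : apolar_act g (lin (fun k => lv k - mv k) ^+ 3) = 0.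
  apply: apolar_pow3 => t; apply: Hg; apply: (@star_t _ j0 j3) => //.
    by rewrite dot_r0 dot_subl dlb0 dmb0 subrr.
  by rewrite dot_r3 !dot_subl dlb0 dmb0 dlb1 dmb1 dlb2 dmb2; ring.
have e6 : (6%:R : C) *: (lin lv ^+ 2 * lin mv) =
  lin (fun k => lv k + mv k) ^+ 3 - lin (fun k => lv k - mv k) ^+ 3 - 2%:R *: lin mv ^+ 3.
  by rewrite lin_add lin_sub -!mul_mpolyC; ring.
have -> : lin lv ^+ 2 * lin mv = (6%:R : C)^-1 *: ((6%:R : C) *: (lin lv ^+ 2 * lin mv)).
  by rewrite scalerA mulVf ?scale1r // pnatr_eq0.
by rewrite e6 apolarZ !apolarB apolarZ hP hm hlpm hlmm !scaler0 subrr sub0r oppr0 scaler0 addr0.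
Qed.


Definition phi (c : 'I_3 -> C) (u : 'rV[C]_3) : C := dot (fun k => u 0 k) c.

Lemma phi_row c j : phi c (row j Lm) = dot (rowf j) c.
Proof. by rewrite /phi /dot !mxE. Qed.

Lemma free3 (u1 u2 u3 : 'rV[C]_3) :
  (forall a1 a2 a3 : C,
     a1 * phi Pv u1 + a2 * phi Pv u2 + a3 * phi Pv u3 = 0 ->
     a1 * phi lv u1 + a2 * phi lv u2 + a3 * phi lv u3 = 0 ->
     a1 * phi mv u1 + a2 * phi mv u2 + a3 * phi mv u3 = 0 ->
     [/\ a1 = 0, a2 = 0 & a3 = 0]) ->
  free [:: u1; u2; u3].
Proof.
move=> H; apply/(@freeP C _ 3 [tuple u1; u2; u3]) => kk hk.
rewrite !big_ord_recl big_ord0 addr0 /= in hk.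
have E : forall c, kk ord0 * phi c u1 + kk (lift ord0 ord0) * phi c u2
   + kk (lift ord0 (lift ord0 ord0)) * phi c u3 = 0.
  move=> c; have := congr1 (phi c) hk; rewrite /phi /dot !mxE => e.
  transitivity (0 * c i0 + 0 * c i1 + 0 * c i2 : C); last ring.
  by rewrite -e; ring.
have [h1 h2 h3] := H _ _ _ (E Pv) (E lv) (E mv).
move=> i; case: i => [[|[|[|i]]] hi] //.
- by rewrite -h1; congr kk; apply/val_inj.
- by rewrite -h2; congr kk; apply/val_inj.
- by rewrite -h3; congr kk; apply/val_inj.
Qed.

Lemma two_neq0 : (2%:R : C) != 0. Proof. by rewrite pnatr_eq0. Qed.

Lemma zero_by3 (x E1 E2 E3 c1 c2 c3 : C) : E1 = 0 -> E2 = 0 -> E3 = 0 ->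
  x = c1 * E1 + c2 * E2 + c3 * E3 -> x = 0.
Proof. by move=> -> -> -> ->; ring. Qed.

Tactic Notation "sol" uconstr(c1) uconstr(c2) uconstr(c3) hyp(e1) hyp(e2) hyp(e3) :=
  refine (@zero_by3 _ _ _ _ c1 c2 c3 e1 e2 e3 _); by field.

Ltac prep := apply: free3 => a1 a2 a3; rewrite !phi_row ?dot_r0 ?dot_r1 ?dot_r2 ?dot_r3
  ?dPb0 ?dPb1 ?dPb2 ?dlb0 ?dlb1 ?dlb2 ?dmb0 ?dmb1 ?dmb2 => e1 e2 e3.

Lemma free012 : free [:: row j0 Lm; row j1 Lm; row j2 Lm].
Proof.
prep; split; [sol (1) (0) (0) e1 e2 e3 | sol (0) (1) (1) e1 e2 e3 | sol (0) (0) ((-1)) e1 e2 e3 ].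
Qed.

Lemma free013 : free [:: row j0 Lm; row j1 Lm; row j3 Lm].
Proof.
prep; split; [sol (1) (0) ((-1)) e1 e2 e3 | sol (0) (1) ((-1)) e1 e2 e3 | sol (0) (0) (1) e1 e2 e3 ].
Qed.

Lemma free023 : free [:: row j0 Lm; row j2 Lm; row j3 Lm].
Proof.
prep; split; [sol (1) ((-1/2%:R)) ((-1/2%:R)) e1 e2 e3 | sol (0) ((1/2%:R)) ((-1/2%:R)) e1 e2 e3
  | sol (0) ((1/2%:R)) ((1/2%:R)) e1 e2 e3 ].
Qed.

Lemma free123 : free [:: row j1 Lm; row j2 Lm; row j3 Lm].
Proof.
prep; split; [sol ((-2%:R)) (1) (1) e1 e2 e3 | sol (1) (0) ((-1)) e1 e2 e3 | sol (1) (0) (0) e1 e2 e3 ].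
Qed.

Lemma Lm_star : star_lines Lm.
Proof.
move=> i j k hij hjk hik.
have h1 := free012; have h2 := free013; have h3 := free023; have h4 := free123.
move: hij hjk hik.
case: (ord4P i) => [->|[->|[->|->]]]; case: (ord4P j) => [->|[->|[->|->]]];
  case: (ord4P k) => [->|[->|[->|->]]]; rewrite ?eqxx // => _ _ _;
  solve [ by []
        | by rewrite free_swap12
        | by rewrite free_swap23
        | by rewrite free_swap12 free_swap23
        | by rewrite free_swap23 free_swap12
        | by rewrite free_swap12 free_swap23 free_swap12 ].
Qed.

Lemma final_apolar : apolar_star F Lm.
Proof. by split; [exact: Lm_star | exact: Lm_apolar]. Qed.
End Fin.
End Final.


Section Core.
Variable C : numFieldType.
Notation P := {mpoly C[3]}.

Lemma rank1_sym (H : 'M[C]_3) : \rank H = 1%N -> (forall i j, H i j = H j i) ->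
  exists (a : 'I_3 -> C) (b : C), [/\ b != 0, (exists r, a r != 0) &
     forall i j, H i j = b * a i * a j].
Proof.
move=> hr hs.
have hH0 : H != 0 by rewrite -mxrank_eq0 hr.
have := mulmx_base H; move: (col_base H) (row_base H); rewrite hr => U W e.
have HE : forall i j, H i j = U i 0 * W 0 j.
  by move=> i j; rewrite -e mxE big_ord1.
case: (boolP [exists i, exists j, H i j != 0]) => [/existsP [i /existsP [j hij]] | hn]; last first.
  exfalso; apply: (negP hH0); apply/eqP/matrixP => i j; rewrite mxE; apply/eqP.
  by apply: contraNT hn => hij; apply/existsP; exists i; apply/existsP; exists j.
have hUi : U i 0 != 0 by apply: contraNneq hij; rewrite HE => ->; rewrite mul0r.
pose b := W 0 i / U i 0.
have hW : forall j, W 0 j = b * U j 0.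
  move=> k; rewrite /b; have := hs i k; rewrite !HE => hk.
  by apply: (mulfI hUi); rewrite hk; field.
exists (fun k => U k 0), b; split.
- by apply: contraNneq hij => hb; rewrite HE hW hb; apply/eqP; ring.
- by exists i.
- by move=> k l; rewrite HE hW; ring.
Qed.

Implicit Types (c : nat -> nat -> nat -> C) (x y z u w : 'I_3 -> C).

Lemma T6_ceval c x : ceval c x * 6%:R = T6 c x x x.
Proof. by rewrite /ceval /T6; ring. Qed.

Lemma T6_sym12 c x y z : T6 c x y z = T6 c y x z.
Proof. by rewrite /T6; ring. Qed.

Lemma T6_lin1 c x y z : T6 c x y z =
  x i0 * T6 c (ev C i0) y z + x i1 * T6 c (ev C i1) y z + x i2 * T6 c (ev C i2) y z.
Proof. by rewrite /T6 /ev /=; ring. Qed.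

Lemma T6_taylor c y v s :
  T6 c (fun k => y k + s * v k) (fun k => y k + s * v k) (fun k => y k + s * v k)
  = T6 c y y y + 3%:R * s * T6 c y y v + 3%:R * s ^+ 2 * T6 c y v v + s ^+ 3 * T6 c v v v.
Proof. by rewrite /T6; ring. Qed.

Lemma T6_bin c q2 q1 (z0 z1 : C) :
  T6 c (fun k => z0 * q2 k + z1 * q1 k) (fun k => z0 * q2 k + z1 * q1 k)
    (fun k => z0 * q2 k + z1 * q1 k)
  = z0 ^+ 3 * T6 c q2 q2 q2 + 3%:R * z0 ^+ 2 * z1 * T6 c q2 q2 q1
    + 3%:R * z0 * z1 ^+ 2 * T6 c q2 q1 q1 + z1 ^+ 3 * T6 c q1 q1 q1.
Proof. by rewrite /T6; ring. Qed.

Definition cross u w : 'I_3 -> C :=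
  pt (u i1 * w i2 - u i2 * w i1) (u i2 * w i0 - u i0 * w i2) (u i0 * w i1 - u i1 * w i0).
Definition det3 u w z := dot u (cross w z).

Lemma cramer q2 q1 v x k : det3 q2 q1 v * x k =
  dot (cross q1 v) x * q2 k + dot (cross v q2) x * q1 k + dot (cross q2 q1) x * v k.
Proof. by rewrite /det3 /dot /cross !ptE; case: (ord3P k) => [->|[->|->]]; ring. Qed.

Lemma det_c01 a q1 v : det3 (pt (a i1) (- a i0) 0) q1 v = v i2 * dot a q1 - q1 i2 * dot a v.
Proof. by rewrite /det3 /dot /cross !ptE; ring. Qed.
Lemma det_c12 a q1 v : det3 (pt 0 (a i2) (- a i1)) q1 v = v i0 * dot a q1 - q1 i0 * dot a v.
Proof. by rewrite /det3 /dot /cross !ptE; ring. Qed.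
Lemma det_c20 a q1 v : det3 (pt (- a i2) 0 (a i0)) q1 v = v i1 * dot a q1 - q1 i1 * dot a v.
Proof. by rewrite /det3 /dot /cross !ptE; ring. Qed.

Lemma basis_ex a v r : a r != 0 -> (exists k, v k != 0) -> dot a v = 0 ->
  exists q1 q2, [/\ dot a q1 = 1, dot a q2 = 0 & det3 q2 q1 v != 0].
Proof.
move=> har [k hk] hav.
pose q1 : 'I_3 -> C := fun j => (j == r)%:R / a r.
have hq1 : dot a q1 = 1.
  rewrite /dot /q1; move: har; case: (ord3P r) => [->|[->|->]] /= har; field.
  1-3: by [].
exists q1; case: (ord3P k) => [ek|[ek|ek]]; subst k.
- exists (pt 0 (a i2) (- a i1)); split => //; last by rewrite det_c12 hq1 hav mulr0 subr0 mulr1.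
  by rewrite /dot !ptE; ring.
- exists (pt (- a i2) 0 (a i0)); split => //; last by rewrite det_c20 hq1 hav mulr0 subr0 mulr1.
  by rewrite /dot !ptE; ring.
- exists (pt (a i1) (- a i0) 0); split => //; last by rewrite det_c01 hq1 hav mulr0 subr0 mulr1.
  by rewrite /dot !ptE; ring.
Qed.

Definition lc3 (s1 : C) u1 (s2 : C) u2 (s3 : C) u3 : 'I_3 -> C :=
  fun k => s1 * u1 k + s2 * u2 k + s3 * u3 k.

Lemma dot_lc3l s1 u1 s2 u2 s3 u3 x :
  dot (lc3 s1 u1 s2 u2 s3 u3) x = s1 * dot u1 x + s2 * dot u2 x + s3 * dot u3 x.
Proof. by rewrite /dot /lc3; ring. Qed.

Lemma dot_lc3r s1 u1 s2 u2 s3 u3 x :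
  dot x (lc3 s1 u1 s2 u2 s3 u3) = s1 * dot x u1 + s2 * dot x u2 + s3 * dot x u3.
Proof. by rewrite /dot /lc3; ring. Qed.

Lemma dot_lin2r a (s t : C) u w :
  dot a (fun k => s * u k + t * w k) = s * dot a u + t * dot a w.
Proof. by rewrite /dot; ring. Qed.

Lemma ceval_ext c x y : (forall k, x k = y k) -> ceval c x = ceval c y.
Proof. by move=> h; rewrite /ceval !h. Qed.

Lemma dot_ev a (r : 'I_3) : dot a (ev C r) = a r.
Proof. by rewrite /dot /ev; case: (ord3P r) => [->|[->|->]] /=; ring. Qed.

Lemma dot0 a : dot a (fun _ => 0 : C) = 0.
Proof. by rewrite /dot; ring. Qed.

Lemma mconst_eval (G : P) x y : (msize G <= 1)%N -> G.@[x] = G.@[y].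
Proof. by move=> /msize1_polyC ->; rewrite !mevalC. Qed.

Lemma cramer_a q2 q1 v a x : det3 q2 q1 v * dot a x =
  dot (cross q1 v) x * dot a q2 + dot (cross v q2) x * dot a q1 + dot (cross q2 q1) x * dot a v.
Proof. by rewrite /det3 /dot /cross !ptE; ring. Qed.

Lemma crs1 q1 v : dot (cross q1 v) q1 = 0. Proof. by rewrite /dot /cross !ptE; ring. Qed.
Lemma crs2 q1 v : dot (cross q1 v) v = 0. Proof. by rewrite /dot /cross !ptE; ring. Qed.
Lemma crs3 q2 q1 v : dot (cross q1 v) q2 = det3 q2 q1 v.
Proof. by rewrite /det3 /dot /cross !ptE; ring. Qed.
Lemma crs4 q2 q1 v : dot (cross q2 q1) v = det3 q2 q1 v.
Proof. by rewrite /det3 /dot /cross !ptE; ring. Qed.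

Lemma eq_by2 (x a1 b1 a2 b2 c1 c2 : C) : a1 = b1 -> a2 = b2 ->
  x = c1 * (a1 - b1) + c2 * (a2 - b2) -> x = 0.
Proof. by move=> -> -> ->; ring. Qed.

Lemma core c v :
  cubp c \is 3.-homog ->
  (exists k, v k != 0) ->
  (forall i, T6 c (ev C i) v v = 0) ->
  (exists (a : 'I_3 -> C) (b : C), [/\ b != 0, (exists r, a r != 0) &
     forall i j, T6 c (ev C i) (ev C j) v = b * a i * a j]) ->
  mirreducible (cubp c) ->
  exists L, apolar_star (cubp c) L.
Proof.
move=> hom hv hg [a [be [hbe [r har] hH]]] hirr.
have hav : dot a v = 0.
  have := hg r; rewrite T6_sym12 T6_lin1 !hH => e.
  have : be * a r * dot a v = 0 by rewrite -e /dot; ring.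
  by move/eqP; rewrite !mulf_eq0 (negbTE hbe) (negbTE har) /= => /eqP.
have [q1 [q2 [hq1 hq2 hD]]] := basis_ex har hv hav.
pose D := det3 q2 q1 v.
pose mu : 'I_3 -> C := fun k => cross q1 v k / D.
pose la : 'I_3 -> C := fun k => cross q2 q1 k / D.
have dmu : forall x, dot mu x = dot (cross q1 v) x / D by move=> x; rewrite /dot /mu; ring.
have dla : forall x, dot la x = dot (cross q2 q1) x / D by move=> x; rewrite /dot /la; ring.
have mq2 : dot mu q2 = 1 by rewrite dmu crs3 divff.
have mq1 : dot mu q1 = 0 by rewrite dmu crs1 mul0r.
have muv : dot mu v = 0 by rewrite dmu crs2 mul0r.
have lq2 : dot la q2 = 0 by rewrite dla /dot /cross !ptE; field.
have lq1 : dot la q1 = 0 by rewrite dla /dot /cross !ptE; field.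
have lv1 : dot la v = 1 by rewrite dla crs4 divff.
have recon : forall x k, x k = dot mu x * q2 k + dot a x * q1 k + dot la x * v k.
  move=> x k; apply: (mulfI hD); rewrite cramer dmu dla.
  have eB : dot (cross v q2) x = det3 q2 q1 v * dot a x.
    by rewrite cramer_a hq1 hq2 hav; ring.
  by rewrite eB /D; field.
pose K0 := T6 c q2 q2 q2 / 6%:R. pose K1 := T6 c q2 q2 q1 / 2%:R.
pose K2 := T6 c q2 q1 q1 / 2%:R. pose K3 := T6 c q1 q1 q1 / 6%:R.
pose h := be / 2%:R.
have hF : forall x, ceval c x = K0 * dot mu x ^+ 3 + K1 * dot mu x ^+ 2 * dot a x
   + K2 * dot mu x * dot a x ^+ 2 + K3 * dot a x ^+ 3 + h * dot la x * dot a x ^+ 2.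
  move=> x.
  pose y := fun k => dot mu x * q2 k + dot a x * q1 k.
  have e1 : ceval c x = ceval c (fun k => y k + dot la x * v k).
    by apply: ceval_ext => k; rewrite {1}(recon x k).
  have tyvv : T6 c y v v = 0 by rewrite T6_lin1 !hg; ring.
  have tvvv : T6 c v v v = 0 by rewrite T6_lin1 !hg; ring.
  have ay : dot a y = dot a x.
    by rewrite /y dot_lin2r hq1 hq2; ring.
  have aux : forall i, T6 c (ev C i) y v = be * a i * dot a y.
    by move=> i; rewrite T6_sym12 T6_lin1 !hH /dot; ring.
  have tyyv : T6 c y y v = be * dot a y ^+ 2.
    by rewrite T6_lin1 !aux /dot; ring.
  rewrite e1; apply: (@mulIf _ (6%:R : C)); first by rewrite pnatr_eq0.
  rewrite T6_ceval T6_taylor tyvv tvvv tyyv ay /y T6_bin /K0 /K1 /K2 /K3 /h.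
  by field.
have hh : h != 0 by rewrite /h mulf_neq0 // invr_eq0 pnatr_eq0.
have hK0 : K0 != 0.
  apply/negP => /eqP K00.
  pose Q : P := K1 *: (lin mu * lin mu) + K2 *: (lin mu * lin a) + K3 *: (lin a * lin a)
     + h *: (lin la * lin a).
  have Qe : forall x, Q.@[x] = K1 * dot mu x ^+ 2 + K2 * dot mu x * dot a x
      + K3 * dot a x ^+ 2 + h * dot la x * dot a x.
    move=> x; rewrite /Q 3!mevalD 4!mevalZ 4!mevalM !lin_eval; ring.
  have homQ : Q \is 2.-homog.
    by rewrite /Q !(dhomogD, dhomogZ) //; apply: (dhomogM (lin_homog _) (lin_homog _)).
  have hom3 : lin a * Q \is 3.-homog := dhomogM (lin_homog a) homQ.
  have eF : cubp c = lin a * Q.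
    by apply: homog3_ext => // x; rewrite cubp_eval hF mevalM lin_eval Qe K00; ring.
  case: hirr => _ /(_ _ _ eF) [hs|hs].
    move: (mconst_eval (ev C r) (fun _ => 0) hs); rewrite !lin_eval dot_ev dot0 => e.
    by rewrite e eqxx in har.
  have e1 := mconst_eval q1 (fun _ => 0) hs.
  have e2 := mconst_eval (fun k => 1 * q1 k + 1 * v k) (fun _ => 0) hs.
  rewrite !Qe !dot0 !dot_lin2r mq1 hq1 lq1 muv hav lv1 in e1 e2.
  have : h = 0.
    by apply: (eq_by2 (c1 := -1) (c2 := 1) e1 e2); ring.
  by move/eqP; rewrite (negbTE hh).
pose al := K1 / (3%:R * K0). pose ga := K2 - 3%:R * K0 * al ^+ 2.
pose de := K3 - K0 * al ^+ 3.
pose Pv := lc3 1 mu al a 0 la. pose lv := lc3 0 mu 1 a 0 la. pose mv := lc3 ga mu de a h la.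
pose b0 := lc3 1 q2 0 q1 (- ga / h) v.
pose b1 := lc3 (- al) q2 1 q1 ((al * ga - de) / h) v.
pose b2 := lc3 0 q2 0 q1 (1 / h) v.
have hK1 : K1 = 3%:R * K0 * al by rewrite /al; field.
have HF : cubp c = K0 *: lin Pv ^+ 3 + lin lv ^+ 2 * lin mv.
  apply: homog3_ext => //.
    rewrite dhomogD //.
      exact: (dhomogZ _ (dhomogMn 3 (lin_homog Pv))).
    exact: (dhomogM (dhomogMn 2 (lin_homog lv)) (lin_homog mv)).
  move=> x; rewrite cubp_eval hF !exprS !expr0 !mulr1.
  rewrite mevalD mevalZ 4!mevalM !lin_eval !dot_lc3l hK1 /ga /de; ring.
eexists; apply: (@final_apolar _ Pv lv mv b0 b1 b2 K0 _ _ _ _ _ _ _ _ _ _ HF).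
all: rewrite ?dot_lc3l !dot_lc3r ?mq2 ?mq1 ?muv ?hq2 ?hq1 ?hav ?lq2 ?lq1 ?lv1.
all: by field.
Qed.
End Core.


Section D12.
Variable C : numFieldType.
Notation P := {mpoly C[3]}.
Lemma cubp_d1 c v (i : 'I_3) : ((cubp c)^`M(i)).@[v] * 2%:R = T6 c (ev C i) v v.
Proof.
rewrite /cubp /X0 /X1 /X2 !(mderivD, mderivZ, mderivM, mderivXi).
rewrite !(mevalD, mevalZ, mevalM, mevalXU, mevalC) /T6 /ev.
by case: (ord3P i) => [->|[->|->]] /=; ring.
Qed.

Lemma cubp_d2 c v (i j : 'I_3) : (((cubp c)^`M(i))^`M(j)).@[v] = T6 c (ev C i) (ev C j) v.
Proof.
rewrite /cubp /X0 /X1 /X2 !(mderivD, mderivZ, mderivM, mderivXi, mderivC).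
rewrite !(mevalD, mevalZ, mevalM, mevalXU, mevalC, meval0) /T6 /ev.
by case: (ord3P i) => [->|[->|->]]; case: (ord3P j) => [->|[->|->]] /=; ring.
Qed.

End D12.

Unset Implicit Arguments.

Theorem proposition4p2 (R : realType) (F : {mpoly (CC R)[3]}) :
  F \is 3.-homog -> cuspidal_cubic F ->
  exists L : 'M[CC R]_(4, 3), apolar_star F L.
Proof.
move=> hF [_ [hirr [v [[hv [hFv hgrad]] hrank]]]].
have eF := cubE hF.
set c := (fun a b c' => F@_(mk a b c')) in eF.
suff [L hL] : exists L : 'M[CC R]_(4, 3), apolar_star (cubp c) L by exists L; rewrite eF.
have hH : forall i j, hessian F v i j = T6 c (ev _ i) (ev _ j) v.
  by move=> i j; rewrite mxE eF cubp_d2.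
apply: core.
- by rewrite -eF.
- exact: hv.
- move=> i; have := hgrad i; rewrite eF => e.
  by rewrite -cubp_d1 e mul0r.
- have hs : forall i j, hessian F v i j = hessian F v j i.
    by move=> i j; rewrite !mxE mderiv_comm.
  have [a [b [hb ha hab]]] := rank1_sym hrank hs.
  exists a, b; split => // i j; by rewrite -hH hab.
- by rewrite -eF.
Qed.
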